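(* Let $S$ be a $\Gamma$-hemiring and let $I$ be a prime h-ideal of $S$. Then for every $x\in S$ with $x\notin I$, $\langle x,\lambda_I\rangle=\lambda_I$.
   Context: A $\Gamma$-hemiring is a pair of additive commutative semigroups with zero $S$ and $\Gamma$ with a map $S\times\Gamma\times S\to S$, $(a,\alpha,b)\mapsto a\alpha b$, such that for all $a,b,c\in S$, $\alpha,\beta\in\Gamma$: $(a+b)\alpha c=a\alpha c+b\alpha c$; $a\alpha(b+c)=a\alpha b+a\alpha c$; $a(\alpha+\beta)b=a\alpha b+a\beta b$; $a\alpha(b\beta c)=(a\alpha b)\beta c$; $0\alpha a=0=a\alpha0$; $a0b=0=b0a$. An ideal of $S$ is a non-empty subset $A$ closed under addition with $s\gamma a\in A$ and $a\gamma s\in A$ for all $s\in S$, $a\in A$, $\gamma\in\Gamma$; it is an h-ideal if for all $x,z\in S$ and $a,b\in A$, $x+a+z=b+z$ implies $x\in A$. A proper h-ideal $I$ is prime if for any h-ideals $H,K$ of $S$, $H\Gamma K\subseteq I$ (where $H\Gamma K$ is the set of finite sums of elements $h\gamma k$, $h\in H$, $\gamma\in\Gamma$, $k\in K$) implies $H\subseteq I$ or $K\subseteq I$. $\lambda_I$ is the characteristic function of $I$. For a fuzzy subset $\mu:S\to[0,1]$ and $x\in S$, $\langle x,\mu\rangle(y)=\inf_{s\in S,\ \alpha,\gamma\in\Gamma}\mu(x\alpha s\gamma y)$. *)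

(* Defs.v *)
From mathcomp Require Import all_boot all_order all_algebra.
From mathcomp Require Import all_classical all_reals.
From mathcomp Require Import Rstruct.
From Stdlib Require Import Rdefinitions.

Set Implicit Arguments.
Unset Strict Implicit.
Unset Printing Implicit Defensive.

Local Open Scope classical_set_scope.

Record GammaHemiring := {
  car :> Type;
  gam : Type;
  sadd : car -> car -> car;
  szero : car;
  gadd : gam -> gam -> gam;
  gzero : gam;
  gmul : car -> gam -> car -> car;
  saddA : forall a b c, sadd a (sadd b c) = sadd (sadd a b) c;
  saddC : forall a b, sadd a b = sadd b a;
  sadd0 : forall a, sadd szero a = a;
  gaddA : forall a b c, gadd a (gadd b c) = gadd (gadd a b) c;
  gaddC : forall a b, gadd a b = gadd b a;
  gadd0 : forall a, gadd gzero a = a;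
  gmulDl : forall a b c al, gmul (sadd a b) al c = sadd (gmul a al c) (gmul b al c);
  gmulDr : forall a b c al, gmul a al (sadd b c) = sadd (gmul a al b) (gmul a al c);
  gmulDm : forall a b al be, gmul a (gadd al be) b = sadd (gmul a al b) (gmul a be b);
  gmulA : forall a b c al be, gmul a al (gmul b be c) = gmul (gmul a al b) be c;
  gmul0l : forall a al, gmul szero al a = szero;
  gmul0r : forall a al, gmul a al szero = szero;
  gmul0m : forall a b, gmul a gzero b = szero /\ gmul b gzero a = szero
}.

Section Defs.
Variable S : GammaHemiring.

Definition is_ideal (A : set S) : Prop :=
  (exists a, A a) /\
  (forall a b, A a -> A b -> A (sadd a b)) /\
  (forall s a g, A a -> A (gmul s g a) /\ A (gmul a g s)).

Definition is_hideal (A : set S) : Prop :=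
  is_ideal A /\
  forall x z a b, A a -> A b -> sadd (sadd x a) z = sadd b z -> A x.

(* H Gamma K : the set of finite (nonempty) sums of elements h g k *)
Inductive GProd (H K : set S) : S -> Prop :=
  | GProd_gen : forall h g k, H h -> K k -> GProd H K (gmul h g k)
  | GProd_add : forall u v, GProd H K u -> GProd H K v -> GProd H K (sadd u v).

Definition is_prime_hideal (I : set S) : Prop :=
  is_hideal I /\ I <> setT /\
  forall H K : set S, is_hideal H -> is_hideal K ->
    GProd H K `<=` I -> H `<=` I \/ K `<=` I.

Definition charfun (I : set S) : S -> R :=
  fun y => if pselect (I y) then 1%R else 0%R.

Definition xres (mu : S -> R) (x : S) : S -> R :=
  fun y => inf [set r | exists (s : S) (al ga : gam S),
                 r = mu (gmul (gmul x al s) ga y)].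

End Defs.

(* Main.v *)
Require Import Defs.
From mathcomp Require Import all_boot all_classical all_reals.
From Stdlib Require Import Rdefinitions.
From mathcomp Require Import all_order all_algebra Rstruct.

Local Open Scope classical_set_scope.

Set Implicit Arguments.
Unset Strict Implicit.
Section H.
Variable S : GammaHemiring.
Variable I : set S.
Hypothesis hI : is_hideal I.

Lemma ideal0 (A : set S) : is_ideal A -> A (szero S).
Proof.
case=> [[a Aa] [_ Hm]].
have [H1 _] := Hm (szero S) a (gzero S) Aa.
by rewrite gmul0l in H1.
Qed.

Definition annr (T : set S) : set S :=
  fun k => forall t g, T t -> I (gmul t g k).
Definition annl (T : set S) : set S :=
  fun h => forall k g, T k -> I (gmul h g k).

Lemma annr_h (T : set S) : (forall t s g, T t -> T (gmul t g s)) ->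
  is_hideal (annr T).
Proof.
move=> HT; have [[_ [IA IM]] Ih] := hI.
split; first split.
- exists (szero S); move=> t g _; rewrite gmul0r; exact: ideal0 (proj1 hI).
- split.
  + move=> a b Ha Hb t g Tt; rewrite gmulDr; exact: IA (Ha _ _ Tt) (Hb _ _ Tt).
  + move=> s a g Ha; split=> t g' Tt.
    * rewrite gmulA; exact: Ha _ _ (HT _ _ _ Tt).
    * rewrite gmulA; exact: (proj2 (IM s _ g (Ha _ _ Tt))).
- move=> x z a b Ha Hb E t g Tt.
  apply: (Ih _ (gmul t g z) (gmul t g a) (gmul t g b)); [exact: Ha|exact: Hb|].
  by rewrite -!gmulDr E.
Qed.

Lemma annl_h (T : set S) : (forall t s g, T t -> T (gmul s g t)) ->
  is_hideal (annl T).
Proof.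
move=> HT; have [[_ [IA IM]] Ih] := hI.
split; first split.
- exists (szero S); move=> t g _; rewrite gmul0l; exact: ideal0 (proj1 hI).
- split.
  + move=> a b Ha Hb t g Tt; rewrite gmulDl; exact: IA (Ha _ _ Tt) (Hb _ _ Tt).
  + move=> s a g Ha; split=> t g' Tt.
    * rewrite -gmulA; exact: (proj1 (IM s _ g (Ha _ _ Tt))).
    * rewrite -gmulA; exact: Ha _ _ (HT _ _ _ Tt).
- move=> x z a b Ha Hb E t g Tt.
  apply: (Ih _ (gmul z g t) (gmul a g t) (gmul b g t)); [exact: Ha|exact: Hb|].
  by rewrite -!gmulDl E.
Qed.

Lemma gprod_sub (H K : set S) : (forall h k g, H h -> K k -> I (gmul h g k)) ->
  GProd H K `<=` I.
Proof.
move=> Hhk u; elim=> [h g k Hh Kk|u1 u2 _ I1 _ I2]; first exact: Hhk.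
exact: (proj1 (proj2 (proj1 hI))) I1 I2.
Qed.

End H.

Theorem corollary3p23 (S : GammaHemiring) (I : set S) :
  is_prime_hideal I ->
  forall x : S, ~ I x -> xres (charfun I) x = charfun I.
Proof.
move=> [hI [InT Hp]] x nIx.
have IM := proj2 (proj2 (proj1 hI)).
have key : forall y, ~ I y -> exists s al ga, ~ I (gmul (gmul x al s) ga y).
  move=> y nIy; apply: contrapT => Hn.
  have Hall : forall s al ga, I (gmul (gmul x al s) ga y).
    move=> s al ga; apply: contrapT => Hc; apply: Hn; by exists s, al, ga.
  pose T1 := fun t => t = x \/ exists s al, t = gmul x al s.
  have T1r : forall t s g, T1 t -> T1 (gmul t g s).
    move=> t s g [->|[s' [al ->]]]; right; first by exists s, g.
    by exists (gmul s' g s), al; rewrite gmulA.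
  pose K0 := annr I T1.
  have hK0 := annr_h hI T1r.
  have hL := annl_h hI (T := K0) (fun t s g Kt => proj1 (proj2 (proj2 (proj1 hK0)) s t g Kt)).
  have xL : annl I K0 x by move=> k g Kk; apply: Kk; left.
  have SyK : forall s g, K0 (gmul s g y).
    move=> s g t g' [->|[s' [al ->]]].
      by rewrite gmulA; apply: Hall.
    by rewrite gmulA -(gmulA x); apply: Hall.
  case: (Hp _ _ hL hK0 (gprod_sub hI (fun h k g Hh Kk => Hh k g Kk))) => Hs.
    exact: nIx (Hs _ xL).
  pose T2 : set S := setT.
  have hK2 := annr_h hI (T := T2) (fun _ _ _ _ => Logic.I).
  have hT : is_hideal (T2 : set S).
    split; first split; [by exists x| by []| by []].
  case: (Hp _ _ hT hK2 (gprod_sub hI (fun h k g Hh Kk => Kk h g Hh))) => Hs2.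
    by apply: InT; apply/seteqP; split => // z _; apply: Hs2.
  apply: nIy; apply: Hs2 => t g _; exact: Hs _ (SyK t g).
apply: funext => y; rewrite /xres /charfun.
set V := (X in inf X).
case: (pselect (I y)) => Iy.
  suff -> : V = [set GRing.one R].
    exact: inf1.
  apply/seteqP; split => r /=.
    move=> [s [al [ga ->]]]; case: pselect => // Hc; exfalso; apply: Hc.
    exact: proj1 (IM _ _ _ Iy).
  move=> ->; exists x, (gzero S), (gzero S); case: pselect => // Hc; exfalso; apply: Hc.
  exact: proj1 (IM _ _ _ Iy).
have [s [al [ga Hn]]] := key y Iy.
have mem0 : V (GRing.zero R).
  by exists s, al, ga; case: pselect.
have lb : lbound V (GRing.zero R).
  move=> r [s' [al' [ga' ->]]]; case: pselect => _ //; exact: ler01.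
rewrite /=; apply: Order.le_anti; apply/andP; split.
  exact: (ge_inf (ex_intro _ _ lb) mem0).
exact: lb_le_inf (ex_intro _ _ mem0) lb.
Qed.
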